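(* Let $p$ be a prime, $q=p^k$, $f(x)\in\mathbb F_q[x]$ and $a\in\mathbb F_q$. Then $\sum_{s=1}^\infty N_s(f,a)x^s$ is a rational function of $x$. More precisely, let $d:=\deg\{u_s(f,a)\}_{s=1}^\infty$ and let $A:=(u_{i+j-1}(f,a))_{1\le i,j\le d+1}$ be the $(d+1)\times(d+1)$ Hankel matrix of the sequence. Then $AX=0$ has a nonzero integer solution, and for any nonzero integer solution $X=(c_d,\dots,c_1,c_0)^T$ of $AX=0$ we have $$\sum_{s=1}^{\infty}N_{s}(f,a)x^s=\frac{x}{1-qx}+\frac{\sum_{i=1}^{d}\Big(\sum_{\substack{j+k=i\\ k\ge0,\ j\ge1}}c_k\,u_j(f,a)\Big)x^i}{\sum_{i=0}^{d}c_ix^i}.$$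
   Context: $\mathbb F_q$ is the finite field with $q=p^k$ elements. For $s\ge1$, $N_s(f,a)$ is the number of $(x_1,\dots,x_s)\in\mathbb F_q^s$ with $f(x_1)+\cdots+f(x_s)=a$, and $u_s(f,a):=N_s(f,a)-q^{s-1}$. A sequence of integers $\{a_s\}_{s\ge1}$ is a linear recursion sequence if there is $g(x)=\sum_{i=0}^d k_ix^i\in\mathbb Z[x]$ with $k_d\neq0$ such that $k_0a_{j+1}+\cdots+k_da_{j+d+1}=0$ for all $j\ge0$; such $g$ is a generating polynomial. The generating polynomials form a principal ideal of $\mathbb Z[x]$ generated by a polynomial of minimal degree with coprime coefficients (the minimal polynomial); the degree of the sequence is the degree of its minimal polynomial. (It is a fact that $\{u_s(f,a)\}$ is a linear recursion sequence, so $d$ is well defined.) *)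

(* Defs.v *)
From HB Require Import structures.
From mathcomp Require Import all_boot all_order all_algebra all_field.
Set Implicit Arguments. Unset Strict Implicit. Unset Printing Implicit Defensive.
Import Order.TTheory GRing.Theory Num.Theory.
Local Open Scope ring_scope.

Definition Nsol (F : finFieldType) (f : {poly F}) (a : F) (s : nat) : int :=
  (#|[set x : {ffun 'I_s -> F} | \sum_(i < s) f.[x i] == a]|)%:Z.

(* u_s(f,a) = N_s(f,a) - q^(s-1), q = #|F| ; meaningful for s >= 1 *)
Definition usol (F : finFieldType) (f : {poly F}) (a : F) (s : nat) : int :=
  Nsol f a s - ((#|F| ^ s.-1)%N)%:Z.

(* g = sum_i k_i x^i (k_d <> 0, i.e. g != 0) is a generating polynomial of the
   sequence (a_s)_{s>=1}, encoded as a : nat -> int with a s = a_s: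
   k_0 a_{j+1} + ... + k_d a_{j+d+1} = 0 for all j >= 0. *)
Definition gen_poly (a : nat -> int) (g : {poly int}) : Prop :=
  g != 0 /\ forall j : nat, \sum_(i < size g) g`_i * a (j + i + 1)%N = 0.

Definition lin_rec_seq (a : nat -> int) : Prop := exists g, gen_poly a g.

(* degree of the sequence = degree of its minimal polynomial
   = the minimal degree of a generating polynomial *)
Definition seq_degree (a : nat -> int) (d : nat) : Prop :=
  (exists g, gen_poly a g /\ (size g).-1 = d) /\
  (forall g, gen_poly a g -> (d <= (size g).-1)%N).

(* Hankel matrix (a_{i+j-1})_{1<=i,j<=d+1}, 0-indexed *)
Definition hankel (a : nat -> int) (d : nat) : 'M[int]_(d.+1) :=
  \matrix_(i < d.+1, j < d.+1) a (i + j + 1)%N.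

(* from X = (c_d, ..., c_1, c_0)^T, the coefficient c_k *)
Definition cX (d : nat) (X : 'cV[int]_(d.+1)) (k : nat) : int :=
  if (k <= d)%N then X (inord (d - k)) ord0 else 0.

Definition denom (d : nat) (X : 'cV[int]_(d.+1)) : {poly int} :=
  \poly_(i < d.+1) cX X i.

Definition numer (a : nat -> int) (d : nat) (X : 'cV[int]_(d.+1)) : {poly int} :=
  \poly_(i < d.+1) (\sum_(1 <= j < i.+1) cX X (i - j) * a j).

(* coefficient of x^n in the formal power series sum_{s>=1} b_s x^s *)
Definition ser (b : nat -> int) (n : nat) : int := if n == 0%N then 0 else b n.

(* coefficient of x^n in the product (polynomial P) * (series sum_{s>=1} b_s x^s) *)
Definition polyser_coef (P : {poly int}) (b : nat -> int) (n : nat) : int :=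
  \sum_(i < n.+1) P`_i * ser b (n - i).

(* Main.v *)
Require Import Defs.
From HB Require Import structures.
From mathcomp Require Import all_boot all_order all_algebra all_field.
From mathcomp Require Import zify ring.
Import Order.TTheory GRing.Theory Num.Theory.
Set Implicit Arguments. Unset Strict Implicit. Unset Printing Implicit Defensive.
Local Open Scope ring_scope.
From Stdlib Require Import Classical.

Definition cnt (F : finFieldType) (f : {poly F}) (s : nat) (b : F) : nat :=
  #|[set x : {ffun 'I_s -> F} | \sum_(i < s) f.[x i] == b]|.

Lemma card_setE (T : finType) (P : pred T) : #|[set x | P x]| = (\sum_x (P x : nat))%N.
Proof.
rewrite -sum1_card big_mkcond /=; apply: eq_bigr => x _; rewrite inE; by case: (P x).
Qed.

Lemma cnt_sum (F : finFieldType) (f : {poly F}) s : (\sum_b cnt f s b)%N = (#|F| ^ s)%N.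
Proof.
rewrite /cnt; under eq_bigr do rewrite card_setE.
rewrite exchange_big /=.
transitivity (\sum_(x : {ffun 'I_s -> F}) 1)%N.
  apply: eq_bigr => x _.
  rewrite (bigD1 (\sum_(i < s) f.[x i])) //= eqxx big1 // => b hb.
  by rewrite eq_sym (negbTE hb).
by rewrite sum1_card card_ffun card_ord.
Qed.

Definition fjoin (F : finFieldType) s (y : F) (x : {ffun 'I_s -> F}) : {ffun 'I_s.+1 -> F} :=
  [ffun i => if unlift ord0 i is Some j then x j else y].

Lemma sum_ffunS (F : finFieldType) s (G : {ffun 'I_s.+1 -> F} -> nat) :
  (\sum_x G x = \sum_(y : F) \sum_(x : {ffun 'I_s -> F}) G (fjoin y x))%N.
Proof.
rewrite pair_big /=.
rewrite (reindex (fun p : F * {ffun 'I_s -> F} => fjoin p.1 p.2)) //.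
apply: onW_bij.
exists (fun x : {ffun 'I_s.+1 -> F} => (x ord0, [ffun i => x (lift ord0 i)])).
  case=> y x /=; rewrite /fjoin ffunE unlift_none; congr (_, _).
  by apply/ffunP => i; rewrite !ffunE liftK.
move=> x; apply/ffunP => i; rewrite /fjoin ffunE.
by case: unliftP => [j|] -> //; rewrite ffunE.
Qed.

Lemma cnt_rec (F : finFieldType) (f : {poly F}) s b :
  cnt f s.+1 b = (\sum_(y : F) cnt f s (b - f.[y])%R)%N.
Proof.
rewrite /cnt card_setE sum_ffunS; apply: eq_bigr => y _.
rewrite card_setE; apply: eq_bigr => x _.
rewrite big_ord_recl /fjoin ffunE unlift_none.
under eq_bigr do rewrite ffunE liftK.
set S := \sum_(i < s) _.
by rewrite [S == _]eq_sym subr_eq eq_sym addrC.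
Qed.

Lemma hmx n (A : 'M[int]_n.+1) (p : {poly int}) :
  horner_mx A p = \sum_(i < size p) p`_i *: A ^+ i.
Proof.
rewrite -{1}[p]coefK poly_def linear_sum; apply: eq_bigr => i _.
by rewrite linearZ /= rmorphXn /= horner_mx_X.
Qed.

Lemma exists_gen (F : finFieldType) (f : {poly F}) (a : F) :
  exists g, gen_poly (usol f a) g.
Proof.
have hF : (0 < #|F|)%N by apply/card_gt0P; exists 0.
set n := #|F|.-1.
have hn : #|F| = n.+1 by rewrite prednK.
pose e (i : 'I_n.+1) : F := enum_val (cast_ord (esym hn) i).
pose r (b : F) : 'I_n.+1 := cast_ord hn (enum_rank b).
have erK : forall b, e (r b) = b by move=> b; rewrite /e /r cast_ordK enum_rankK.
have reK : forall i, r (e i) = i by move=> i; rewrite /e /r enum_valK cast_ordKV.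
pose M : 'M[int]_n.+1 := \matrix_(i, j) \sum_(y : F) ((e j == e i - f.[y]) : nat)%:Z.
pose v t : 'cV[int]_n.+1 := \col_i (cnt f t (e i))%:Z.
have hv : forall t, v t.+1 = M *m v t.
  move=> t; apply/matrixP => i k; rewrite !mxE cnt_rec -natz natr_sum.
  under [RHS]eq_bigr do rewrite mxE mxE mulr_suml.
  rewrite exchange_big /=; apply: eq_bigr => y _.
  rewrite (bigD1 (r (e i - f.[y]))) //= erK eqxx mul1r big1 ?addr0 ?natz //.
  move=> j hj; have : e j != e i - f.[y].
    by apply: contra hj => /eqP <-; rewrite reK.
  by move/negbTE => ->; rewrite mul0r.
have hvk : forall t k, v (t + k)%N = M ^+ k *m v t.
  move=> t; elim=> [|k IH]; first by rewrite addn0 expr0 mul1mx.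
  by rewrite addnS hv IH exprS mulmxA.
pose L : 'rV[int]_n.+1 := \row_k (M (r a) k - 1).
have hL : forall t, (L *m v t) 0 0 = usol f a t.+1.
  move=> t; rewrite mxE.
  under eq_bigr do rewrite mxE mulrBl mul1r.
  rewrite sumrB.
  have -> : \sum_k M (r a) k * v t k 0 = (M *m v t) (r a) 0 by rewrite mxE.
  rewrite -hv mxE erK /usol /Nsol; congr (_ - _).
  have -> : \sum_k v t k 0 = \sum_k (cnt f t (e k))%:Z by apply: eq_bigr => k _; rewrite mxE.
  have -> : \sum_k (cnt f t (e k))%:Z = ((\sum_k cnt f t (e k))%N)%:Z.
    by rewrite -[RHS]natz natr_sum; apply: eq_bigr => k _; rewrite natz.
  congr (Posz _); rewrite -(cnt_sum f t).
  rewrite (reindex e) //; apply: onW_bij; by exists r.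
exists (char_poly M); split; first exact/monic_neq0/char_poly_monic.
move=> j.
transitivity ((L *m (horner_mx M (char_poly M) *m v j)) 0 0); last first.
  by rewrite Cayley_Hamilton mul0mx mulmx0 mxE.
rewrite hmx mulmx_suml mulmx_sumr summxE; apply: eq_bigr => i _.
by rewrite -scalemxAl -scalemxAr mxE -hvk hL addn1.
Qed.
Lemma PoszX (q n : nat) : ((q ^ n)%N)%:Z = (q%:Z) ^+ n.
Proof. elim: n => [|n IH] //; by rewrite expnS PoszM IH exprS. Qed.

Lemma gen_size (a : nat -> int) (g : {poly int}) d :
  gen_poly a g -> (size g).-1 = d -> size g = d.+1.
Proof.
move=> [g0 _] <-; rewrite prednK // lt0n size_poly_eq0 //.
Qed.

Lemma ext_rec (a : nat -> int) (g : {poly int}) d (X : 'cV[int]_d.+1) :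
 gen_poly a g -> (size g).-1 = d -> hankel a d *m X = 0 ->
 forall i, \sum_(j < d.+1) X j 0 * a (i + j + 1)%N = 0.
Proof.
move=> hg hs hX.
have sz := gen_size hg hs.
case: hg => g0 hg.
have hl : g`_d != 0.
  by rewrite -hs -[g`_ _]/(lead_coef g) lead_coef_eq0.
set b := fun i => \sum_(j < d.+1) X j 0 * a (i + j + 1)%N.
have hb0 : forall i, (i < d.+1)%N -> b i = 0.
  move=> i hi; have := congr1 (fun M : 'cV[int]_d.+1 => M (Ordinal hi) 0) hX.
  rewrite !mxE /b => H; rewrite -[RHS]H; under [RHS]eq_bigr => j _ do rewrite mxE mulrC; by [].
have hrec : forall i, \sum_(k < d.+1) g`_k * b (i + k)%N = 0.
  move=> i; rewrite /b.
  under eq_bigr do rewrite mulr_sumr.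
  rewrite exchange_big /=.
  apply: big1 => j _.
  have := hg (i + j)%N; rewrite sz => H.
  transitivity (X j 0 * (\sum_(k < d.+1) g`_k * a (i + j + k + 1)%N)); last by rewrite H mulr0.
  rewrite mulr_sumr; apply: eq_bigr => k _.
  rewrite mulrCA; congr (_ * (_ * a _)); lia.
move=> i; rewrite -/(b i).
elim/ltn_ind: i => i IH.
case: (ltnP i d.+1) => hi; first exact: hb0.
have := hrec (i - d)%N; rewrite big_ord_recr /= big1.
  rewrite add0r subnK; last by apply: ltnW.
  by move/eqP; rewrite mulf_eq0 (negbTE hl) /= => /eqP.
move=> k _; rewrite IH ?mulr0 //; have := ltn_ord k; lia.
Qed.

Definition trunc (b : nat -> int) (n : nat) : {poly int} := \poly_(i < n.+1) ser b i.

Lemma polyser_trunc P b n : polyser_coef P b n = (P * trunc b n)`_n.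
Proof.
rewrite /polyser_coef coefM; apply: eq_bigr => i _.
by rewrite coef_poly ltnS leq_subr.
Qed.

Lemma coef_agree (A B C : {poly int}) n :
  (forall m, (m <= n)%N -> A`_m = B`_m) -> (C * A)`_n = (C * B)`_n.
Proof.
move=> H; rewrite !coefM; apply: eq_bigr => i _; by rewrite H // leq_subr.
Qed.

Lemma truncS b n : trunc b n.+1 = trunc b n + (ser b n.+1) *: 'X^(n.+1).
Proof.
apply/polyP => i; rewrite coefD coefZ coefXn !coef_poly.
case: (ltngtP i n.+1) => [lt|gt|->].
- by rewrite ltnS ltnW // mulr0 addr0.
- by rewrite ltnNge gt /= mulr0 addr0.
- by rewrite ltnS leqnn mulr1 add0r.
Qed.

Lemma trunc_geom (q : int) n :
  (1 - q%:P * 'X) * trunc (fun s => q ^+ s.-1) n = 'X - (q ^+ n)%:P * 'X^(n.+1).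
Proof.
elim: n => [|n IH].
  have -> : trunc (fun s => q ^+ s.-1) 0 = 0.
    by apply/polyP => i; rewrite coef_poly coef0; case: i.
  by rewrite mulr0 expr0 mul1r expr1 subrr.
rewrite truncS mulrDr IH /ser /= -mul_polyC (exprS q) polyCM (exprS ('X : {poly int}) (n.+1)).
ring.
Qed.

Lemma denom_coef d (X : 'cV[int]_d.+1) i : (denom X)`_i = cX X i.
Proof.
rewrite coef_poly /cX; case: ifP => //; by rewrite ltnS => ->.
Qed.

Lemma cX_small d (X : 'cV[int]_d.+1) i : (i <= d)%N -> cX X (d - i) = X (inord i) 0.
Proof. move=> h; rewrite /cX leq_subr; congr (X (inord _) _); lia. Qed.

Lemma core (u : nat -> int) g d (X : 'cV[int]_d.+1) :
  gen_poly u g -> (size g).-1 = d -> hankel u d *m X = 0 ->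
  forall n m, (m <= n)%N -> (denom X * trunc u n)`_m = (numer u X)`_m.
Proof.
move=> hg hs hX n m hmn.
rewrite coefM coef_poly.
under eq_bigr => i _ do rewrite denom_coef coef_poly ltnS (leq_trans (leq_subr _ _) hmn).
case: (ltnP m d.+1) => hm.
  rewrite -(big_mkord xpredT (fun i => cX X i * ser u (m - i))).
  rewrite big_nat_rev /= big_ltn //.
  have -> : (0 + m.+1 - 1 = m)%N by lia.
  rewrite subnn /ser /= mulr0 add0r.
  apply: eq_big_nat => j /andP [h1 h2].
  have -> : (0 + m.+1 - j.+1 = m - j)%N by lia.
  have -> : (m - (m - j) = j)%N by lia.
  by case: j h1 h2.
rewrite -(big_mkord xpredT (fun i => cX X i * ser u (m - i))).
rewrite (@big_cat_nat _ _ _ d.+1) //; last by apply: ltnW.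
rewrite /= [X in _ + X]big1_seq ?addr0; last first.
  move=> i /andP [_]; rewrite mem_index_iota => /andP [h1 _].
  rewrite /cX; case: leqP => h; [lia | by rewrite mul0r].
rewrite big_nat_rev /=.
have H : \sum_(0 <= j < d.+1) X (inord j) 0 * u (m - d.+1 + j + 1)%N = 0.
  rewrite big_mkord -[RHS](ext_rec hg hs hX (m - d.+1)%N).
  by apply: eq_bigr => j _; rewrite inord_val.
rewrite -[RHS]H.
apply: eq_big_nat => j /andP [h1 h2].
have -> : (0 + d.+1 - j.+1 = d - j)%N by lia.
rewrite cX_small; last by rewrite -ltnS.
congr (_ * _); rewrite /ser.
have -> : (m - (d - j) = m - d.+1 + j + 1)%N by lia.
by rewrite addn1.
Qed.

Lemma ident (F : finFieldType) (f : {poly F}) (a : F) d (X : 'cV[int]_d.+1) g :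
  gen_poly (usol f a) g -> (size g).-1 = d -> hankel (usol f a) d *m X = 0 ->
  forall n, polyser_coef (denom X * (1 - (#|F|%:Z)%:P * 'X)) (Nsol f a) n =
        ('X * denom X + (1 - (#|F|%:Z)%:P * 'X) * numer (usol f a) X)`_n.
Proof.
move=> hg hs hX n.
set q := (#|F|%:Z).
have hT : trunc (Nsol f a) n = trunc (usol f a) n + trunc (fun s => q ^+ s.-1) n.
  apply/polyP => i; rewrite coefD !coef_poly; case: ifP => _; last by rewrite addr0.
  rewrite /ser; case: eqP => _; first by rewrite addr0.
  rewrite /usol PoszX /q; exact: (esym (subrK _ _)).
rewrite polyser_trunc hT [RHS]coefD.
have -> : denom X * (1 - q%:P * 'X) * (trunc (usol f a) n + trunc (fun s => q ^+ s.-1) n)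
  = (1 - q%:P*'X) * (denom X * trunc (usol f a) n)
    + denom X * ((1 - q%:P*'X) * trunc (fun s => q ^+ s.-1) n).
  by rewrite mulrDr !mulrA [denom X * _]mulrC.
rewrite coefD trunc_geom.
rewrite (coef_agree _ (fun m hm => core hg hs hX hm)).
rewrite mulrBr coefB mulrA coefMXn ltnSn subr0.
by rewrite addrC [denom X * 'X]mulrC.
Qed.

Lemma exists_min (P : nat -> Prop) :
  (exists n, P n) -> exists m, P m /\ forall k, P k -> (m <= k)%N.
Proof.
move=> [n Pn]; elim/ltn_ind: n Pn => n IH Pn.
case: (classic (exists k, (k < n)%N /\ P k)) => [[k [hk Pk]] | H].
  exact: IH k hk Pk.
exists n; split=> // k Pk; rewrite leqNgt; apply/negP => hk; apply: H; by exists k.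
Qed.

Theorem theorem1p2 (F : finFieldType) (f : {poly F}) (a : F) :
  (exists d, seq_degree (usol f a) d) /\
  forall d : nat, seq_degree (usol f a) d ->
    (exists X : 'cV[int]_(d.+1), X != 0 /\ hankel (usol f a) d *m X = 0) /\
    forall X : 'cV[int]_(d.+1), X != 0 -> hankel (usol f a) d *m X = 0 ->
      forall n : nat,
        polyser_coef (denom X * (1 - (#|F|%:Z)%:P * 'X)) (Nsol f a) n =
        ('X * denom X + (1 - (#|F|%:Z)%:P * 'X) * numer (usol f a) X)`_n.
Proof.
split.
  have [g hg] := exists_gen f a.
  have [m [[g' [hg' hs]] hmin]] :=
    @exists_min (fun d => exists g, gen_poly (usol f a) g /\ (size g).-1 = d)
      (ex_intro _ _ (ex_intro _ g (conj hg erefl))).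
  exists m; split; first by exists g'.
  by move=> g2 hg2; apply: hmin; exists g2.
move=> d [[g [hg hs]] _]; split; last first.
  by move=> X _ hX n; exact: ident hg hs hX n.
have sz := gen_size hg hs.
exists (\col_j g`_j); split.
  apply/eqP => /matrixP /(_ (inord d) 0); rewrite !mxE inordK // => H.
  case: hg => g0 _; move: g0; rewrite -lead_coef_eq0 /lead_coef sz /= H.
  by rewrite eqxx.
apply/matrixP => i k; rewrite !mxE.
under eq_bigr do rewrite !mxE mulrC.
case: hg => _ /(_ i); rewrite sz => H; rewrite -[RHS]H.
reflexivity.
Qed.
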